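(* Let $n\ge3$. For an SSM-recurrent configuration $c$ on $W_n$ with $\Phi_W(c)=(\mathcal O,M)$, let $S(\Phi_W(c))$ be the subgraph of $C_n$ whose vertex set is $\{i\in[n]: \text{the edge }\{i,i+1\}\text{ is directed } i+1\to i \text{ in } \mathcal O\}$ and whose edge set is $\{\{i-1,i\}: i\in M\}$. Then $c\mapsto S(\Phi_W(c))$ is a bijection from the set of SSM-recurrent configurations on $W_n$ onto $\mathrm{Sub}(C_n)$. Under this bijection, $\mathrm{level}(c)$ equals the number of edges of the subgraph, and $\mathrm{weight}^{01^*}(c)$ equals the number of vertices of $C_n$ not in the subgraph.
   Context: $C_n$: cycle on $[n]$ with edges $\{i,i+1\}$ (indices mod $n$, vertices clockwise); $W_n$: $C_n$ plus sink $0$ adjacent to all of $[n]$. $\mathrm{Sub}(C_n)$ is the set of subgraphs $(A,E_A)$ with $A\subseteq[n]$ non-empty and $E_A$ a set of edges of $C_n$ with both endpoints in $A$. Stable configurations on $W_n$: $\{0,1,2\}^n$. SSM (parameter $p\in(0,1)$: a toppling vertex sends a grain to each neighbour independently with probability $p$, grains to the sink vanish); Markov chain: add a grain at a random vertex, stabilise; SSM-recurrent = recurrent state; known: stable $c$ is SSM-recurrent iff for all $i,j$ with $c_i=c_j=0$ some $k\in(i,j)$ has $c_k=2$, $(i,j)$ being the vertices strictly between $i$ and $j$ clockwise from $i$ ($(i,i)=[n]\setminus\{i\}$). $\mathrm{level}(c)=\sum_i c_i-n$. Cyclically first maximal vertex: $c_i=2$ and some $j$ has $c_j=0$ and $c_k=1$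 for all $k\in(j,i)$. $m(c)$: $m(c)_i=0$ if $c_i=0$, $2$ if $i$ cyclically first maximal, $1$ otherwise. For $c'=m(c)$, $\mathcal O(c')$ is the unique orientation of $C_n$ with in-degree $c'_i$ at each $i$ if $c'\ne(1,\ldots,1)$, and the counter-clockwise cycle ($i+1\to i$ for all $i$) otherwise. $\Phi_W(c)=(\mathcal O(m(c)),M)$ with $M$ the set of $i$ with $c_i=2$ not cyclically first maximal. $\mathrm{weight}^{01^*}(c)$ is the number of vertices $i$ such that $c_i=0$, or $c_i=1$ and there is $j$ with $c_j=0$ and $c_k=1$ for all $k$ in the clockwise half-open interval $(j,i]$. *)

(* Defs.v *)
From mathcomp Require Import all_boot all_algebra.
Set Implicit Arguments. Unset Strict Implicit. Unset Printing Implicit Defensive.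

(* Vertices of C_n are 'I_n = {0,..,n-1} (standing for [n]), clockwise
   successor ordS (i |-> i+1 mod n), predecessor ord_pred. *)

Section Wheel.
Variable n : nat.

(* stable configurations on W_n : values in {0,1,2} *)
Definition config := {ffun 'I_n -> 'I_3}.

Definition cdist (i k : 'I_n) : nat := (k + n - i) %% n.
Definition cspan (i j : 'I_n) : nat := if i == j then n else cdist i j.
(* k in (i,j): strictly between i and j clockwise from i; (i,i) = [n]\{i} *)
Definition in_open (i j k : 'I_n) : bool :=
  (0 < cdist i k) && (cdist i k < cspan i j).
Definition in_ohalf (j i k : 'I_n) : bool :=
  (0 < cdist j k) && (cdist j k <= cspan j i).

(* SSM-recurrence, via the known characterisation *)
Definition ssm_recurrent (c : config) : bool :=
  [forall i, forall j, ((c i == 0 :> nat) && (c j == 0 :> nat)) ==>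
     [exists k, in_open i j k && (c k == 2 :> nat)]].

Definition level (c : config) : int := (\sum_i (c i : nat))%:Z - n%:Z.

Definition first_max (c : config) (i : 'I_n) : bool :=
  (c i == 2 :> nat) &&
  [exists j, (c j == 0 :> nat) && [forall k, in_open j i k ==> (c k == 1 :> nat)]].

Definition mconf (c : config) (i : 'I_n) : nat :=
  if c i == 0 :> nat then 0 else if first_max c i then 2 else 1.

(* Orientation of C_n: o i = true iff edge {i,i+1} is directed i+1 -> i. *)
Definition orientation := {ffun 'I_n -> bool}.
Definition indeg (o : orientation) (i : 'I_n) : nat :=
  (o i : nat) + (~~ o (ord_pred i) : nat).

Definition orient (c' : 'I_n -> nat) : orientation :=
  if [forall i, c' i == 1] then [ffun => true]
  else odflt [ffun => true] [pick o : orientation | [forall i, indeg o i == c' i]].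

Definition Mset (c : config) : {set 'I_n} :=
  [set i | (c i == 2 :> nat) && ~~ first_max c i].

Definition PhiW (c : config) : orientation * {set 'I_n} :=
  (orient (mconf c), Mset c).

Definition cedge (i : 'I_n) : {set 'I_n} := [set i; ordS i].

Definition subgraph := ({set 'I_n} * {set {set 'I_n}})%type.

Definition is_sub (G : subgraph) : bool :=
  [&& G.1 != set0, G.2 \subset [set cedge i | i : 'I_n] &
      [forall e in G.2, e \subset G.1]].

Definition Sof (p : orientation * {set 'I_n}) : subgraph :=
  ([set i | p.1 i], [set cedge (ord_pred i) | i in p.2]).

Definition weight01 (c : config) : nat :=
  #|[set i | (c i == 0 :> nat) ||
       ((c i == 1 :> nat) &&
        [exists j, (c j == 0 :> nat) &&
           [forall k, in_ohalf j i k ==> (c k == 1 :> nat)]])]|.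

End Wheel.

(* Main.v *)
Require Import Defs.
From mathcomp Require Import all_boot all_algebra zify.
Set Implicit Arguments. Unset Strict Implicit. Unset Printing Implicit Defensive.

Section Aux.
Variable n : nat.
Hypothesis hn : 2 < n.
Local Notation I := ('I_n).
Local Notation pr := (@ord_pred n).
Local Notation succ := (@ordS n).

Lemma n_gt0 : 0 < n. Proof. by apply: leq_trans hn. Qed.

Lemma pos_proof (i : I) d : (i + d) %% n < n.
Proof. by rewrite ltn_mod n_gt0. Qed.
Definition pos (i : I) d : I := Ordinal (pos_proof i d).

Lemma cdist_pos (i : I) (d : nat) : cdist i (pos i d) = d %% n.
Proof.
rewrite /cdist /= -addnBA; last exact: ltnW.
rewrite modnDml.
have -> : i + d + (n - i) = d + n by have := ltn_ord i; lia.
by rewrite modnDr.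
Qed.

Lemma pos_cdist (i : I) (k : I) : pos i (cdist i k) = k.
Proof.
apply: val_inj => /=; rewrite /cdist modnDmr.
have -> : i + (k + n - i) = k + n by have := ltn_ord i; lia.
by rewrite modnDr modn_small.
Qed.

Lemma pos0 (i : I) : pos i 0 = i.
Proof. by apply: val_inj => /=; rewrite addn0 modn_small. Qed.

Lemma posn (i : I) : pos i n = i.
Proof. by apply: val_inj => /=; rewrite modnDr modn_small. Qed.

Lemma succ_pos (i : I) (d : nat) : succ (pos i d) = pos i d.+1.
Proof. by apply: val_inj => /=; rewrite -addn1 modnDml addn1 addnS. Qed.

Lemma pred_pos (i : I) (d : nat) : pr (pos i d.+1) = pos i d.
Proof. by rewrite -succ_pos ordSK. Qed.

Lemma cdist_lt (i : I) (k : I) : cdist i k < n.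
Proof. by rewrite ltn_mod n_gt0. Qed.

Lemma cdist0 (i : I) (k : I) : (cdist i k == 0) = (k == i).
Proof.
apply/eqP/eqP => [h|->]; first by rewrite -(pos_cdist i k) h pos0.
by rewrite -{2}(pos0 i) cdist_pos mod0n.
Qed.

Lemma cdist_inj (i : I) : injective (cdist i).
Proof. by move=> a b h; rewrite -(pos_cdist i a) h pos_cdist. Qed.

Lemma succ_pos1 (i : I) : succ i = pos i 1.
Proof. by rewrite -{1}(pos0 i) succ_pos. Qed.

Lemma pred_neq (i : I) : pr i != i.
Proof.
apply/eqP => h.
have : cdist (pr i) i = 1.
  by rewrite -{2}(ord_predK i) succ_pos1 cdist_pos modn_small // ltnW.
by rewrite h -{2}(pos0 i) cdist_pos mod0n.
Qed.

Lemma cdist_pred_self (i : I) : cdist (pr i) i = 1.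
Proof. by rewrite -{2}(ord_predK i) succ_pos1 cdist_pos modn_small // ltnW. Qed.

Lemma cspan_succ (j : I) (p : I) : p != j -> cspan j (succ p) = (cdist j p).+1.
Proof.
move=> pj.
have hp : 0 < cdist j p by rewrite lt0n cdist0.
have e : succ p = pos j (cdist j p).+1 by rewrite -succ_pos pos_cdist.
rewrite /cspan; case: eqP => [h|h].
  have := cdist_lt j p; rewrite leq_eqVlt => /orP [/eqP //|lt].
  by move: e; rewrite -h -{1}(pos0 j) => /(congr1 (cdist j)); rewrite !cdist_pos mod0n modn_small.
rewrite e cdist_pos modn_small //.
rewrite ltn_neqAle cdist_lt andbT; apply/eqP => h'.
by apply: h; rewrite e h' posn.
Qed.

Lemma cspan_pos (i : I) (j : I) : pos i (cspan i j) = j.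
Proof. rewrite /cspan; case: eqP => [->|_]; [exact: posn | exact: pos_cdist]. Qed.

Lemma cspan_bounds (i : I) (j : I) : 0 < cspan i j <= n.
Proof.
rewrite /cspan; case: eqP => [_|/eqP h]; first by rewrite n_gt0 leqnn.
by rewrite lt0n cdist0 eq_sym h ltnW // cdist_lt.
Qed.

Lemma INT (j : I) (i : I) (k : I) : j != pr i -> in_open j i k = in_ohalf j (pr i) k.
Proof.
move=> h; rewrite /in_open /in_ohalf.
have := @cspan_succ j (pr i); rewrite ord_predK eq_sym => -> //.
by rewrite ltnS /cspan (negbTE h).
Qed.

Lemma HALF (j : I) (i : I) (k : I) : j != i -> in_ohalf j i k = in_open j i k || (k == i).
Proof.
move=> h; rewrite /in_ohalf /in_open /cspan (negbTE h).
case: (boolP (k == i)) => [/eqP ->|ki] /=.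
  by rewrite leqnn orbT andbT lt0n cdist0 eq_sym.
rewrite orbF; congr (_ && _); rewrite leq_eqVlt.
have /negbTE -> // : cdist j k != cdist j i by apply: contra ki => /eqP/cdist_inj ->.
Qed.

Lemma EMPTY (i : I) (k : I) : in_open (pr i) i k = false.
Proof.
by rewrite /in_open /cspan (negbTE (pred_neq i)) cdist_pred_self; case: (cdist _ _).
Qed.

Lemma self_ohalf (j : I) (p : I) : j != p -> in_ohalf j p p.
Proof. by move=> h; rewrite /in_ohalf /cspan (negbTE h) leqnn lt0n cdist0 eq_sym h. Qed.

Lemma closure (P : pred I) i0 : (forall i, P i -> P (succ i)) -> P i0 -> forall j, P j.
Proof.
move=> hS h0 j; rewrite -(pos_cdist i0 j); elim: (cdist i0 j) => [|d IH].
  by rewrite pos0.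
by rewrite -succ_pos; apply: hS.
Qed.

Lemma closure_back (P : pred I) i0 : (forall i, P (succ i) -> P i) -> P i0 -> forall j, P j.
Proof.
move=> hS h0 j; apply/negPn/negP => hj.
have hc : forall i, (predC P) i -> (predC P) (succ i).
  by move=> i /= /negP hi; apply/negP => /hS.
by have := closure hc hj i0; rewrite /= h0.
Qed.


Definition Zp (c : config n) (i : I) : bool :=
  (c i == 0 :> nat) ||
  ((c i == 1 :> nat) &&
   [exists j, (c j == 0 :> nat) && [forall k, in_ohalf j i k ==> (c k == 1 :> nat)]]).

Lemma L1 (c : config n) (i : I) : (c i == 1 :> nat) -> Zp c i = Zp c (pr i).
Proof.
move=> c1; rewrite {1}/Zp c1 (eqP c1) /=.
apply/idP/idP.
  case/existsP => j /andP [cj /forallP hk].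
  have ji : j != i by apply: contraTneq cj => ->; rewrite (eqP c1).
  case: (eqVneq j (pr i)) => [<-|jp]; first by rewrite /Zp cj.
  have hp : in_ohalf j i (pr i) by rewrite HALF // INT // self_ohalf.
  rewrite /Zp (eqP (implyP (hk (pr i)) hp)) /=.
  apply/existsP; exists j; rewrite cj /=; apply/forallP => k; apply/implyP => hk'.
  by apply: (implyP (hk k)); rewrite HALF // INT // hk'.
rewrite /Zp; case/orP => [cp0 | /andP [cp1 /existsP [j /andP [cj /forallP hk]]]].
  apply/existsP; exists (pr i); rewrite cp0 /=; apply/forallP => k; apply/implyP.
  by rewrite HALF ?pred_neq // EMPTY /= => /eqP ->.
have jp : j != pr i by apply: contraTneq cj => ->; rewrite (eqP cp1).
have ji : j != i by apply: contraTneq cj => ->; rewrite (eqP c1).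
apply/existsP; exists j; rewrite cj /=; apply/forallP => k; apply/implyP.
rewrite HALF // INT // => /orP [hk'|/eqP ->//]; exact: (implyP (hk k)).
Qed.

Lemma L2 (c : config n) (i : I) : (c i == 2 :> nat) -> first_max c i = Zp c (pr i).
Proof.
move=> c2; rewrite /first_max c2 /=.
apply/idP/idP.
  case/existsP => j /andP [cj /forallP hk].
  have ji : j != i by apply: contraTneq cj => ->; rewrite (eqP c2).
  case: (eqVneq j (pr i)) => [<-|jp]; first by rewrite /Zp cj.
  have hp : in_open j i (pr i) by rewrite INT // self_ohalf.
  rewrite /Zp (eqP (implyP (hk (pr i)) hp)) /=.
  apply/existsP; exists j; rewrite cj /=; apply/forallP => k; apply/implyP => hk'.
  by apply: (implyP (hk k)); rewrite INT.
rewrite /Zp; case/orP => [cp0 | /andP [cp1 /existsP [j /andP [cj /forallP hk]]]].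
  apply/existsP; exists (pr i); rewrite cp0 /=; apply/forallP => k; apply/implyP.
  by rewrite EMPTY.
have jp : j != pr i by apply: contraTneq cj => ->; rewrite (eqP cp1).
apply/existsP; exists j; rewrite cj /=; apply/forallP => k; apply/implyP.
rewrite INT // => hk'; exact: (implyP (hk k)).
Qed.

Lemma recP (c : config n) : ssm_recurrent c ->
  forall a b, (c a == 0 :> nat) -> (c b == 0 :> nat) ->
  exists2 k, in_open a b k & (c k == 2 :> nat).
Proof.
move=> /forallP h a b ca cb; have /forallP/(_ b)/implyP := h a.
by rewrite ca cb => /(_ isT) /existsP [k /andP [h1 h2]]; exists k.
Qed.

Lemma Rlem (c : config n) (i : I) : ssm_recurrent c -> (c i == 0 :> nat) -> ~~ Zp c (pr i).
Proof.
move=> hr ci; apply/negP; case/orP => [cp0|/andP [cp1 /existsP [j /andP [cj /forallP hk]]]].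
  by have [k] := recP hr cp0 ci; rewrite EMPTY.
have jp : j != pr i by apply: contraTneq cj => ->; rewrite (eqP cp1).
have [k hk1 hk2] := recP hr cj ci.
rewrite INT // in hk1; have := implyP (hk k) hk1; by rewrite (eqP hk2).
Qed.

Definition aZ (c : config n) : orientation n := [ffun i => ~~ Zp c i].

Lemma indeg_aZ (c : config n) (i : I) : ssm_recurrent c -> indeg (aZ c) i = mconf c i.
Proof.
move=> hr; rewrite /indeg !ffunE negbK /mconf.
have := ltn_ord (c i); case hv: (nat_of_ord (c i)) => [|[|[|//]]] _ /=.
- have h0 : (c i == 0 :> nat) by rewrite hv.
  by rewrite {1}/Zp h0 /= (negbTE (Rlem hr h0)).
- have h1 : (c i == 1 :> nat) by rewrite hv.
  rewrite -(L1 h1) /first_max hv /=; by case: (Zp c i).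
- have h2 : (c i == 2 :> nat) by rewrite hv.
  rewrite (L2 h2) {1}/Zp hv /=; by case: (Zp c (pr i)).
Qed.

Lemma U (o1 o2 : orientation n) : (forall i, indeg o1 i = indeg o2 i) -> o1 != o2 ->
  forall i, indeg o1 i = 1.
Proof.
move=> he /eqP hne.
case: (pickP (fun i => o1 i != o2 i)) => [i0 hi0|hall]; last first.
  by exfalso; apply: hne; apply/ffunP => i; apply/eqP; have := hall i => /negbT/negPn.
have hstep : forall i, o1 (succ i) != o2 (succ i) -> (o1 i != o2 i) && (o1 i == o1 (succ i)).
  move=> i; have := he (succ i); rewrite /indeg ordSK.
  by case: (o1 i); case: (o2 i); case: (o1 (succ i)); case: (o2 (succ i)).
have hD : forall j, o1 j != o2 j.
  have hb : forall i, (fun i => o1 i != o2 i) (succ i) -> (fun i => o1 i != o2 i) i.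
    move=> i h; have := hstep i h; by case/andP.
  exact: (closure_back hb hi0).
move=> i; rewrite /indeg.
have hh : o1 (succ (pr i)) != o2 (succ (pr i)) by rewrite ord_predK hD.
have /andP [_ /eqP ->] := hstep (pr i) hh; rewrite ord_predK.
by case: (o1 i).
Qed.

Lemma orient_aZ (c : config n) : ssm_recurrent c -> orient (mconf c) = aZ c.
Proof.
move=> hr; rewrite /orient; case: ifP => [/forallP hall | hnall].
  apply/ffunP => i; rewrite !ffunE; apply/esym/negP.
  case/orP => [ci0 | /andP [_ /existsP [j /andP [cj _]]]].
    by have := hall i; rewrite /mconf ci0.
  by have := hall j; rewrite /mconf cj.
case: pickP => [o /forallP ho | hnone] /=.
  case: (eqVneq o (aZ c)) => // hne.
  have h1 := U (fun i => etrans (eqP (ho i)) (esym (indeg_aZ i hr))) hne.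
  move/negbT: hnall => /negP []; apply/forallP => i; by rewrite -(eqP (ho i)) h1.
have := hnone (aZ c); move/negbT/negP; case; apply/forallP => i; by rewrite indeg_aZ.
Qed.

Lemma c_decomp (c : config n) (i : I) : (c i : nat) = mconf c i + (i \in Mset c).
Proof.
rewrite /mconf /Mset inE /first_max.
have := ltn_ord (c i); case: (nat_of_ord (c i)) => [|[|[|//]]] _ //=.
by case: [exists _, _].
Qed.

Lemma sum_indeg (o : orientation n) : \sum_i indeg o i = n.
Proof.
rewrite /indeg big_split /=.
have -> : \sum_i (~~ o (pr i) : nat) = \sum_i (~~ o i : nat).
  by rewrite (reindex_inj (@ordS_inj n)); apply: eq_bigr => i _; rewrite ordSK.
rewrite -big_split /=.
under eq_bigr => i _ do rewrite addnC addn_negb.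
by rewrite sum_nat_const card_ord muln1.
Qed.

Lemma cedge_inj : injective (fun i : I => cedge (pr i)).
Proof.
move=> a b /= h; apply: (@ord_pred_inj n).
move: h; set p := pr a; set q := pr b; move=> h.
have hp : p \in cedge q by rewrite -h /cedge !inE eqxx.
have hq : q \in cedge p by rewrite h /cedge !inE eqxx.
move: hp hq; rewrite /cedge !inE => /orP [/eqP //|/eqP hp] /orP [/eqP //|/eqP hq].
have : cdist q (pos q 2) = 2 by rewrite cdist_pos modn_small.
by rewrite -succ_pos -succ_pos1 -hp -hq -{2}(pos0 q) cdist_pos mod0n.
Qed.


Lemma S1 (c : config n) : ssm_recurrent c -> (Sof (PhiW c)).1 = [set i | ~~ Zp c i].
Proof. by move=> hr; apply/setP => i; rewrite /Sof /PhiW /= orient_aZ // !inE ffunE. Qed.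

Lemma IVT (f : nat -> bool) m : ~~ f 0 -> f m -> exists d, [/\ 0 < d, d <= m, ~~ f d.-1 & f d].
Proof.
move=> h0; elim: m => [|m IH] hm; first by rewrite hm in h0.
case: (boolP (f m)) => fm.
  by have [d [h1 h2 h3 h4]] := IH fm; exists d; split => //; apply: leq_trans h2 _.
by exists m.+1.
Qed.

Section Surj.
Variable G : subgraph n.
Hypothesis hG : is_sub G.
Local Notation A := G.1.
Local Notation E := G.2.

Definition rv (i : I) : nat := (i \in A) + (pr i \notin A) + (cedge (pr i) \in E).

Lemma edge_in i : cedge (pr i) \in E -> (pr i \in A) && (i \in A).
Proof.
move=> he; case/and3P: hG => _ _ /forallP /(_ (cedge (pr i))) /implyP /(_ he) /subsetP hs.
by rewrite !hs // /cedge !inE ?eqxx ?ord_predK ?eqxx ?orbT.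
Qed.

Lemma rv_lt i : rv i < 3.
Proof.
rewrite /rv; case: (boolP (cedge (pr i) \in E)) => he; last first.
  by case: (i \in A); case: (pr i \in A).
by case/andP: (edge_in he) => -> ->.
Qed.

Definition cfg : config n := [ffun i => inord (rv i)].

Lemma cfgE i : (cfg i : nat) = rv i.
Proof. by rewrite ffunE inordK // rv_lt. Qed.

Lemma F0 i : (cfg i == 0 :> nat) = (i \notin A) && (pr i \in A).
Proof.
rewrite cfgE /rv; case: (boolP (cedge (pr i) \in E)) => he.
  by case/andP: (edge_in he) => -> ->.
by case: (i \in A); case: (pr i \in A).
Qed.

Lemma F2 i : (cfg i == 2 :> nat) = ((i \in A) && (pr i \notin A)) || (cedge (pr i) \in E).
Proof.
rewrite cfgE /rv; case: (boolP (cedge (pr i) \in E)) => he.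
  by case/andP: (edge_in he) => -> ->.
by case: (i \in A); case: (pr i \in A).
Qed.

Lemma F1 i : (cfg i == 1 :> nat) -> (i \in A) = (pr i \in A).
Proof.
rewrite cfgE /rv; case: (boolP (cedge (pr i) \in E)) => he.
  by case/andP: (edge_in he) => -> ->.
by case: (i \in A); case: (pr i \in A).
Qed.

Lemma Zchar i : Zp cfg i = (i \notin A).
Proof.
pose D := fun j => Zp cfg j != (j \notin A).
have hstep : forall j, D j -> (cfg j == 1 :> nat) && D (pr j).
  move=> j; rewrite /D.
  have := ltn_ord (cfg j); case hv: (nat_of_ord (cfg j)) => [|[|[|//]]] _ /=.
  - have h0 : (cfg j == 0 :> nat) by rewrite hv.
    by rewrite {1}/Zp h0 /=; move: h0; rewrite F0 => /andP [-> _].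
  - have h1 : (cfg j == 1 :> nat) by rewrite hv.
    by rewrite (L1 h1) (F1 h1).
  - have h2 : (cfg j == 2 :> nat) by rewrite hv.
    rewrite {1}/Zp hv /=; move: h2; rewrite F2 => /orP [/andP [-> _]//|/edge_in /andP [_ ->]] //.
apply/eqP/negPn/negP => hi.
have hall : forall j, D j.
  have hb : forall j, D (succ j) -> D j by move=> j /hstep /andP [_]; rewrite ordSK.
  exact: (closure_back hb hi).
have c1 : forall j, (cfg j == 1 :> nat) by move=> j; case/andP: (hstep j (hall j)).
have zf : forall j, Zp cfg j = false.
  move=> j; rewrite /Zp (eqP (c1 j)) /=; case: existsP => // -[k /andP [hk _]].
  by rewrite (eqP (c1 k)) in hk.
case/and3P: hG => /set0Pn [x hx] _ _.
by have := hall x; rewrite /D zf hx.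
Qed.

Definition oA : orientation n := [ffun i => i \in A].

Lemma fmE i : first_max cfg i = (cfg i == 2 :> nat) && (pr i \notin A).
Proof.
case: (boolP (cfg i == 2 :> nat)) => h; first by rewrite (L2 h) Zchar.
by rewrite /first_max (negbTE h).
Qed.

Lemma mconfE i : mconf cfg i = indeg oA i.
Proof.
rewrite /mconf /indeg fmE F0 F2 !ffunE.
case: (boolP (cedge (pr i) \in E)) => he.
  by case/andP: (edge_in he) => -> ->.
by case: (i \in A); case: (pr i \in A).
Qed.

Lemma orientE : orient (mconf cfg) = oA.
Proof.
rewrite /orient; case: ifP => [/forallP hall | hnall].
  have hc : forall i, i \in A -> succ i \in A.
    move=> i hi; have := hall (succ i); rewrite mconfE /indeg !ffunE ordSK hi.
    by case: (succ i \in A).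
  case/and3P: hG => /set0Pn [x hx] _ _.
  by apply/ffunP => i; rewrite !ffunE (closure hc hx).
case: pickP => [o /forallP ho | hnone] /=.
  case: (eqVneq o oA) => // hne.
  have h1 := U (fun i => etrans (eqP (ho i)) (mconfE i)) hne.
  move/negbT: hnall => /negP []; apply/forallP => i; by rewrite -(eqP (ho i)) h1.
have := hnone oA; move/negbT/negP; case; apply/forallP => i; by rewrite mconfE.
Qed.

Lemma MsetE : Mset cfg = [set i | cedge (pr i) \in E].
Proof.
apply/setP => i; rewrite !inE fmE F2.
case: (boolP (cedge (pr i) \in E)) => he.
  by case/andP: (edge_in he) => -> ->.
by case: (i \in A); case: (pr i \in A).
Qed.

Lemma SofE : Sof (PhiW cfg) = G.
Proof.
transitivity (G.1, G.2); last by case: G hG.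
rewrite /Sof /PhiW /=; congr pair.
  by apply/setP => i; rewrite orientE !inE ffunE.
rewrite MsetE; apply/setP => x; apply/imsetP/idP => [[i] |hx].
  by rewrite inE => h ->.
case/and3P: hG => _ /subsetP hs _.
have := hs x hx; case/imsetP => q _ ex; subst x.
by exists (succ q); rewrite ?inE ordSK.
Qed.

Lemma cfg_rec : ssm_recurrent cfg.
Proof.
apply/forallP => i; apply/forallP => j; apply/implyP => /andP [ci cj].
rewrite F0 in ci; rewrite F0 in cj.
case/andP: ci => ni _; case/andP: cj => _ pj.
have [L0 Ln] := andP (cspan_bounds i j).
pose f := fun d => pos i d \in A.
have f0 : ~~ f 0 by rewrite /f pos0.
have fL : f (cspan i j).-1.
  by rewrite /f -pred_pos prednK // cspan_pos.
have [d [d0 dL fd1 fd]] := IVT f0 fL.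
have dc : d < cspan i j by rewrite -(prednK L0) ltnS.
apply/existsP; exists (pos i d); apply/andP; split.
  rewrite /in_open cdist_pos modn_small; first by rewrite d0.
  by apply: leq_trans Ln.
move: fd1 fd; rewrite /f => fd1 fd.
have ep : pr (pos i d) = pos i d.-1 by rewrite -{1}(prednK d0) pred_pos.
by rewrite F2 ep fd fd1.
Qed.

End Surj.

End Aux.

Theorem mainTheorem7 (n : nat) (hn : 3 <= n) :
  let R := [set c : config n | ssm_recurrent c] in
  [/\ {in R &, injective (fun c => Sof (PhiW c))},
      (forall c, c \in R -> is_sub (Sof (PhiW c))),
      (forall G : subgraph n, is_sub G -> exists2 c, c \in R & Sof (PhiW c) = G) &
      (forall c, c \in R ->
         level c = Posz #|(Sof (PhiW c)).2| /\
         weight01 c = #|~: (Sof (PhiW c)).1|)].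
Proof.
move=> R; split.
- move=> c1 c2; rewrite !inE => h1 h2 heq.
  have e1 := congr1 fst heq; have e2 := congr1 snd heq.
  rewrite !S1 // in e1.
  have eM : Mset c1 = Mset c2 by apply: (imset_inj (@cedge_inj n hn)).
  have eA : aZ c1 = aZ c2.
    apply/ffunP => x; rewrite !ffunE.
    by move/setP: e1 => /(_ x); rewrite !inE.
  apply/ffunP => i; apply: val_inj.
  by rewrite /= !c_decomp -!indeg_aZ // eA eM.
- move=> c; rewrite inE => hr; apply/and3P; split.
  + rewrite S1 //; apply/set0Pn.
    case: (pickP (fun i => ~~ Zp c i)) => [x hx|hn0]; first by exists x; rewrite inE.
    exfalso.
    have i0 : 'I_n by exists 0; apply: leq_trans hn.
    have [z hz] : exists z, (c z == 0 :> nat).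
      have := hn0 i0; move/negbT; rewrite negbK /Zp.
      case/orP => [h|/andP [_ /existsP [j /andP [hj _]]]]; by [exists i0 | exists j].
    by have := hn0 (ord_pred z); rewrite /= (Rlem hn hr hz).
  + apply/subsetP => e /imsetP [i _ ->]; by apply/imsetP; exists (ord_pred i).
  + apply/forallP => e; apply/implyP => /imsetP [i hi ->].
    rewrite S1 //; apply/subsetP => x.
    move: hi; rewrite inE => /andP [c2 nfm].
    rewrite /cedge !inE ord_predK => /orP [/eqP -> | /eqP ->].
      by rewrite -(L2 hn c2).
    by rewrite /Zp (eqP c2).
- move=> G hG; exists (cfg G); first by rewrite inE cfg_rec.
  exact: SofE.
- move=> c; rewrite inE => hr; split.
  + rewrite /= card_imset; last exact: cedge_inj hn.
    rewrite /level.
    have -> : \sum_i (c i : nat) = n + #|Mset c|.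
      under eq_bigr => i _ do rewrite c_decomp -indeg_aZ //.
      rewrite big_split /= sum_indeg; congr (_ + _).
      rewrite -sum1_card [RHS]big_mkcond /=; apply: eq_bigr => i _; by case: (i \in Mset c).
    by rewrite PoszD GRing.addrAC GRing.subrr GRing.add0r.
  + rewrite /weight01 S1 //; apply: eq_card => i; by rewrite !inE negbK /Zp.
Qed.
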